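(* In a molecule-wall system, let $\mu$ be the stationary probability measure of $P$ given by the microcanonical (case of a rigid wall) or Gibbs canonical (case of a wall with moving parts at parameter $\beta$) distribution as described in the context, and suppose the system is symmetric. Then $P$, acting on functions by $(Pf)(s)=\int f(\pi(T(s,y)))\,d\eta(y)$, is a self-adjoint operator of norm $1$ on $L^2(N_{\rm mol},\mu)$.
   Context: Molecule-wall system: $M$ is a smooth Riemannian manifold with corners and $U:M\to\mathbb R$ a smooth potential; motions follow Newton's equation with specular reflection at the boundary. $M_{\rm wall}$, $\overline M_{\rm mol}$ are Riemannian manifolds, $k\ge0$; near and beyond the hypersurface $S=\overline M_{\rm mol}\times\{0\}\times\mathbb T^k\times M_{\rm wall}$ the manifold $M$ is the Riemannian product $\overline M_{\rm mol}\times(a,\infty)\times\mathbb T^k\times M_{\rm wall}$ and $U$ splits as a sum of a molecule and a wall potential. $N_S^+$ (tangent vectors at points of $S$ pointing into the interaction zone $\{d<0\}$) decomposes as $N_{\rm mol}\times\mathbb T^k\times N_{\rm wall}$, $N_{\rm wall}=TM_{\rm wall}$, $N_{\rm mol}=T\overline M_{\rm mol}\times\mathbb H$ ($\mathbb H$ the half-space of incoming center-of-mass velocities); $\pi:N_S^+\to N_{\rm mol}$ is the projection. $T:N_S^+\to N_S^+$ is the return map (flow until the next outward crossing of $S$, then reflection of the normal component), assumed smooth on an open dense full-measure set. $\eta$ is a probability on $\mathbb T^k\times N_{\rm wall}$: normalized Lebesgue measure on $\mathbb T^k$ if $M_{\rm wall}$ is a point, otherwise that times the Gibbs distribution $Z^{-1}e^{-\beta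 E}|\Omega^E_{\rm wall}\wedge dE|$ on $N_{\rm wall}$. $P$ acts on measures by $\mu P=(\pi\circ T)_*(\mu\otimes\eta)$; $\mu$ is the corresponding stationary measure (microcanonical, resp. Gibbs with the same $\beta$, projected to $N_{\rm mol}$), so that $\mu\otimes\eta$ is $T$-invariant. The system is symmetric if there are measurable automorphisms $\tilde J,\tilde S$ of $N_S^+$ such that (i) they preserve the invariant measure $\mu\otimes\eta$ (the natural measure derived from the symplectic structure); (ii) $\pi\circ\tilde J=\pi\circ\tilde S=J\circ\pi$ for a single map $J:N_{\rm mol}\to N_{\rm mol}$; (iii) $\tilde J\circ T=T^{-1}\circ\tilde J$ and $\tilde S\circ T=T\circ\tilde S$. *)

(* Defs.v *)
From HB Require Import structures.
From mathcomp Require Import all_boot all_order all_algebra.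
From mathcomp Require Import all_classical all_reals all_analysis.
Set Implicit Arguments. Unset Strict Implicit. Unset Printing Implicit Defensive.
Import Order.TTheory GRing.Theory Num.Theory.
Local Open Scope classical_set_scope.
Local Open Scope ring_scope.

Definition measure_preserving d (T : measurableType d) (R : realType)
  (m : set T -> \bar R) (F : T -> T) : Prop :=
  measurable_fun setT F /\
  forall A, measurable A -> m (F @^-1` A) = m A.

Definition measure_automorphism d (T : measurableType d) (R : realType)
  (m : set T -> \bar R) (F : T -> T) : Prop :=
  measure_preserving m F /\
  exists G : T -> T, measurable_fun setT G /\ cancel F G /\ cancel G F.

Definition L2fun d (T : measurableType d) (R : realType)
  (mu : {measure set T -> \bar R}) (f : T -> R) : Prop :=
  measurable_fun setT f /\ finite_norm mu 2%:E f.

Definition L2dot d (T : measurableType d) (R : realType)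
  (mu : {measure set T -> \bar R}) (f g : T -> R) : R :=
  Rintegral mu setT (fun x => f x * g x).

(** The transition operator acting on functions on N_mol = X, where
    N_S^+ = X * Y with Y = T^k x N_wall, and pi = fst:
    (P f)(s) = \int f (pi (T (s, y))) d eta(y). *)
Definition transition_op d1 d2 (X : measurableType d1) (Y : measurableType d2)
  (R : realType) (eta : {measure set Y -> \bar R}) (T : X * Y -> X * Y)
  (f : X -> R) : X -> R :=
  fun s => Rintegral eta setT (fun y => f (T (s, y)).1).

Definition L2_opnorm d (X : measurableType d) (R : realType)
  (mu : {measure set X -> \bar R}) (P : (X -> R) -> (X -> R)) : \bar R :=
  ereal_inf [set c%:E | c in [set c : R | 0 <= c /\
     forall f, L2fun mu f ->
       ('N[mu]_(2%:E)[EFin \o P f] <= c%:E * 'N[mu]_(2%:E)[EFin \o f])%E]].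

Definition L2_selfadjoint d (X : measurableType d) (R : realType)
  (mu : {measure set X -> \bar R}) (P : (X -> R) -> (X -> R)) : Prop :=
  (forall f, L2fun mu f -> L2fun mu (P f)) /\
  (forall f g, L2fun mu f -> L2fun mu g -> L2dot mu (P f) g = L2dot mu f (P g)).

(* Main.v *)
Require Import Defs.
From HB Require Import structures.
From mathcomp Require Import all_boot all_order all_algebra.
From mathcomp Require Import all_classical all_reals all_analysis measurable_realfun.
Import Order.TTheory GRing.Theory Num.Theory.
Set Implicit Arguments. Unset Strict Implicit. Unset Printing Implicit Defensive.
Local Open Scope classical_set_scope.
Local Open Scope ring_scope.
Section transfer.
Local Open Scope ereal_scope.
Context (R : realType) (dz dw : measure_display) (Z : measurableType dz) (W : measurableType dw).
Variables (m : {measure set Z -> \bar R}) (nu : {measure set W -> \bar R}) (F : Z -> W).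
Hypothesis mF : measurable_fun setT F.
Hypothesis hF : forall A, measurable A -> m (F @^-1` A) = nu A.

Lemma tr_ge0 (h : W -> \bar R) : measurable_fun [set: W] h -> (forall w, 0 <= h w) ->
  \int[m]_z h (F z) = \int[nu]_w h w.
Proof.
move=> mh h0.
have H := ge0_integral_pushforward mF m (D:=setT) measurableT mh (fun w _ => h0 w).
rewrite preimage_setT in H; rewrite -H.
by apply: eq_measure_integral => A mA _ /=; rewrite /pushforward hF.
Qed.

Lemma tr_integrable (h : W -> \bar R) : nu.-integrable setT h ->
  m.-integrable setT (h \o F).
Proof.
move=> /integrableP[mh ih]; apply/integrableP; split.
  exact: measurableT_comp.
rewrite (tr_ge0 (h:=abse \o h)) //=.
exact: measurableT_comp.
Qed.

Lemma tr_integral (h : W -> \bar R) : nu.-integrable setT h ->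
  \int[m]_z h (F z) = \int[nu]_w h w.
Proof.
move=> ih; have [mh _] := integrableP _ _ _ ih.
rewrite integralE [RHS]integralE.
rewrite -(tr_ge0 (h:=h^\+)); last 2 first.
  exact: measurable_funepos. by move=> w; exact: funepos_ge0.
rewrite -(tr_ge0 (h:=h^\-)); last 2 first.
  exact: measurable_funeneg. by move=> w; exact: funeneg_ge0.
by congr (_ - _); apply: eq_integral => z _; rewrite ?funeposE ?funenegE.
Qed.

End transfer.
Section L2.
Context (R : realType) (d : measure_display) (T : measurableType d).
Variable mu : {measure set T -> \bar R}.

Lemma Lnorm2E (f : T -> R) :
  ('N[mu]_(2%:E)[EFin \o f] = (\int[mu]_x (f x ^+ 2)%:E) `^ 2^-1)%E.
Proof.
rewrite unlock /=; congr (_ `^ _)%E; apply: eq_integral => x _.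

by rewrite powR_mulrn // real_normK // num_real.
Qed.

Lemma L2funE (f : T -> R) : L2fun mu f <-> f \in Lfun mu 2%:E.
Proof.
rewrite /L2fun; split.
  by move=> [mf ff]; rewrite inE; apply/andP; split; rewrite inE.
by rewrite inE => /andP[]; rewrite !inE.
Qed.

Lemma L2fun_sqr (f : T -> R) : measurable_fun setT f ->
  mu.-integrable setT (EFin \o (fun x => f x ^+ 2)) -> L2fun mu f.
Proof.
move=> mf /integrableP[_ fi]; split; first exact: mf.
rewrite /finite_norm Lnorm2E; apply: poweR_lty.
rewrite (le_lt_trans _ fi) //; apply: ge0_le_integral => //.
- by move=> x _; rewrite lee_fin sqr_ge0.
- by apply/measurable_EFinP; exact: measurable_funX.
- apply: measurableT_comp => //; apply/measurable_EFinP; exact: measurable_funX.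
- by move=> x _ /=; rewrite lee_fin ger0_norm // sqr_ge0.
Qed.

Lemma L2fun_integrable_sqr (f : T -> R) : L2fun mu f ->
  mu.-integrable setT (EFin \o (fun x => f x ^+ 2)).
Proof. by move/L2funE; exact: Lfun2_integrable_sqr. Qed.

End L2.
Section Main.
Context (R : realType) (d1 d2 : measure_display)
  (X : measurableType d1) (Y : measurableType d2)
  (mu : probability X R) (eta : probability Y R).

Local Notation m := (mu \x eta)%E.

Lemma m_fst A : measurable A -> m (fst @^-1` A) = mu A.
Proof.
move=> mA; rewrite -setXT product_measure1E //.
transitivity (mu A * 1)%E; last by rewrite mule1.
by congr (_ * _)%E; exact: probability_setT.
Qed.

Lemma m_setT : m setT = 1%E.
Proof.
rewrite -setXTT product_measure1E //.
transitivity (mu setT * 1)%E; last by rewrite mule1; exact: probability_setT.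
by congr (_ * _)%E; exact: probability_setT.
Qed.

Lemma m_fin : m setT \is a fin_num.
Proof. by rewrite m_setT. Qed.

Lemma L2_fst (f : X -> R) : L2fun mu f -> L2fun m (fun z => f z.1).
Proof.
move=> /[dup] Lf [mf _]; apply: L2fun_sqr.
  exact: measurableT_comp.
have := L2fun_integrable_sqr Lf.
have := tr_integrable (m := m) (nu := mu) measurable_fst m_fst.
by move=> h /h.
Qed.

Lemma int_fst (f : X -> R) : L2fun mu f ->
  (\int[m]_z ((f z.1) ^+ 2)%:E = \int[mu]_x (f x ^+ 2)%:E)%E.
Proof.
move=> Lf.
exact: (tr_integral (m := m) (nu := mu) measurable_fst m_fst (L2fun_integrable_sqr Lf)).
Qed.

Lemma L2_comp (F : X * Y -> X * Y) (h : X * Y -> R) :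
  measure_preserving m F -> L2fun m h -> L2fun m (h \o F).
Proof.
move=> [mF hF] /[dup] Lh [mh _]; apply: L2fun_sqr.
  exact: measurableT_comp.
exact: (tr_integrable (m := m) (nu := m) mF hF (L2fun_integrable_sqr Lh)).
Qed.

Lemma int_comp (F : X * Y -> X * Y) (h : X * Y -> R) :
  measure_preserving m F -> L2fun m h ->
  (\int[m]_z ((h (F z)) ^+ 2)%:E = \int[m]_z (h z ^+ 2)%:E)%E.
Proof.
move=> [mF hF] Lh.
exact: (tr_integral (m := m) (nu := m) mF hF (L2fun_integrable_sqr Lh)).
Qed.

Lemma L2_int (h : X * Y -> R) : L2fun m h -> m.-integrable setT (EFin \o h).
Proof.
move/L2funE => Lh; apply/Lfun1_integrable.
exact: (Lfun_subset12 m_fin Lh).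
Qed.

Lemma L2_mul_int (a b : X * Y -> R) : L2fun m a -> L2fun m b ->
  m.-integrable setT (EFin \o (fun z => a z * b z)).
Proof.
move=> /L2funE La /L2funE Lb; apply/Lfun1_integrable.
exact: Lfun2_mul_Lfun1.
Qed.

End Main.
Section Trans.
Context (R : realType) (d1 d2 : measure_display)
  (X : measurableType d1) (Y : measurableType d2)
  (mu : probability X R) (eta : probability Y R).
Local Notation m := (mu \x eta)%E.
Variable T : X * Y -> X * Y.
Hypothesis mpT : measure_preserving m T.

Local Notation P := (transition_op eta T).

Lemma LK (k : X -> R) : L2fun mu k -> L2fun m (fun z => k (T z).1).
Proof. by move=> Lk; exact: (L2_comp mpT (L2_fst eta Lk)). Qed.

Lemma P_meas (k : X -> R) : L2fun mu k -> measurable_fun setT (P k).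
Proof.
move=> Lk.
have iK := L2_int (LK Lk).
exact: (measurableT_comp (fine_measurable measurableT) (measurable_fubini_F iK)).
Qed.

Lemma P_fubini (h k : X -> R) : L2fun mu h -> L2fun mu k ->
  Rintegral mu setT (fun s => h s * P k s) =
  Rintegral m setT (fun z => h z.1 * k (T z).1).
Proof.
move=> Lh Lk; rewrite /Rintegral; congr fine.
have iPhi := L2_mul_int (L2_fst eta Lh) (LK Lk).
rewrite -(integral12_prod_meas1 iPhi).
apply: ae_eq_integral => //.
- apply/measurable_EFinP; apply: measurable_funM.
    by case: Lh.
  exact: P_meas.
- exact: measurable_fubini_F iPhi.
- have := ae_integrable1 (L2_int (LK Lk)).
  apply: filterS => x ix _.
  rewrite /fubini_F /=.
  under eq_integral => y _ do rewrite EFinM.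
  rewrite integralZl // /transition_op /Rintegral EFinM fineK //.
  exact: integrable_fin_num.
Qed.

End Trans.
Lemma L2_int_gen (R : realType) (d : measure_display) (T : measurableType d)
  (P : probability T R) (f : T -> R) : L2fun P f -> P.-integrable setT (EFin \o f).
Proof.
move/L2funE => Lf; apply/Lfun1_integrable.
apply: (Lfun_subset12 _ Lf); exact: fin_num_measure.
Qed.

Section Trans2.
Context (R : realType) (d1 d2 : measure_display)
  (X : measurableType d1) (Y : measurableType d2)
  (mu : probability X R) (eta : probability Y R).
Local Notation m := (mu \x eta)%E.
Variable T : X * Y -> X * Y.
Hypothesis mpT : measure_preserving m T.
Local Notation P := (transition_op eta T).

Lemma P_sq_le (k : X -> R) s : L2fun mu k ->
  (((P k s) ^+ 2)%:E <= \int[eta]_y ((k (T (s, y)).1) ^+ 2)%:E)%E.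
Proof.
move=> Lk.
have [mK _] := LK mpT Lk.
pose Ks := fun y => k (T (s, y)).1.
have mKs : measurable_fun setT Ks.
  exact: (measurableT_comp mK (pair1_measurable s)).
have [fin|inf] := ltP (\int[eta]_y ((k (T (s, y)).1) ^+ 2)%:E)%E +oo%E; last first.
  exact: le_trans (leey _) inf.
have LKs : L2fun eta Ks.
  apply: L2fun_sqr => //; apply/integrableP; split.
    by apply/measurable_EFinP; exact: measurable_funX.
  rewrite (le_lt_trans _ fin) //; apply: ge0_le_integral => //.
  - apply: measurableT_comp => //; apply/measurable_EFinP; exact: measurable_funX.
  - by apply/measurable_EFinP; exact: measurable_funX.
  - by move=> y _ /=; rewrite ger0_norm // sqr_ge0.
have := variance_ge0 eta Ks.
move/L2funE: (LKs) => LKs'.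
rewrite varianceE // subre_ge0; last first.
  rewrite unlock; apply: integrable_fin_num => //.
  rewrite exprfctE; exact: Lfun2_integrable_sqr.
rewrite !unlock exprfctE /=.
have fE : (\int[eta]_w (Ks w)%:E)%E \is a fin_num.
  apply: integrable_fin_num => //; exact: L2_int_gen.
move=> H; rewrite /transition_op /Rintegral EFin_expe fineK //.
Qed.

Lemma P_bound (k : X -> R) : L2fun mu k ->
  (\int[mu]_s ((P k s) ^+ 2)%:E <= \int[mu]_x (k x ^+ 2)%:E)%E.
Proof.
move=> Lk.
have [mK _] := LK mpT Lk.
pose G := fun z : X * Y => ((k (T z).1) ^+ 2)%:E.
have mG : measurable_fun setT G.
  by apply/measurable_EFinP; exact: measurable_funX.
have G0 : forall z, (0 <= G z)%E by move=> z; rewrite lee_fin sqr_ge0.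
have H2 : (\int[mu]_s fubini_F eta G s = \int[mu]_x (k x ^+ 2)%:E)%E.
  rewrite -(fubini_tonelli1 G mG G0) /G.
  rewrite (int_comp mpT (L2_fst eta Lk)).
  by rewrite (int_fst eta Lk).
rewrite -H2.
apply: ge0_le_integral => //.
- by move=> s _; rewrite lee_fin sqr_ge0.
- exact: (proj2 (measurable_EFinP _ _) (measurable_funX 2 (P_meas mpT Lk))).
- exact: measurable_fun_fubini_tonelli_F.
- by move=> s _; exact: P_sq_le.
Qed.

Lemma P_L2 (k : X -> R) : L2fun mu k -> L2fun mu (P k).
Proof.
move=> Lk; have mP := P_meas mpT Lk.
have mP2 := proj2 (measurable_EFinP _ _) (measurable_funX 2 mP).
apply: L2fun_sqr; first exact: mP.
apply/integrableP; split; first exact: mP2.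
have H : (\int[mu]_x (k x ^+ 2)%:E < +oo)%E.
  have := integrable_fin_num measurableT (L2fun_integrable_sqr Lk).
  by rewrite ltey_eq => ->.
apply: le_lt_trans H.
apply: le_trans (P_bound Lk).
apply: ge0_le_integral => //.
- by apply: measurableT_comp => //; exact: mP2.
- by move=> x _ /=; rewrite ger0_norm // sqr_ge0.
Qed.

End Trans2.
Section Sym.
Context (R : realType) (d1 d2 : measure_display)
  (X : measurableType d1) (Y : measurableType d2)
  (mu : probability X R) (eta : probability Y R).
Local Notation m := (mu \x eta)%E.
Variables (T Tinv Jt St : X * Y -> X * Y) (J : X -> X).
Hypotheses (hTi : cancel T Tinv) (hiT : cancel Tinv T).
Hypothesis mpT : measure_preserving m T.
Hypotheses (aJ : measure_automorphism m Jt) (aS : measure_automorphism m St).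
Hypotheses (hJ1 : forall z, (Jt z).1 = J z.1) (hS1 : forall z, (St z).1 = J z.1).
Hypotheses (hJT : forall z, Jt (T z) = Tinv (Jt z)) (hST : forall z, St (T z) = T (St z)).

Lemma sym_int (f g : X -> R) : L2fun mu f -> L2fun mu g ->
  (\int[m]_z ((g z.1 * f (T z).1)%:E) = \int[m]_z ((f z.1 * g (T z).1)%:E))%E.
Proof.
move=> Lf Lg.
have [[mJ hJ] _] := aJ; have [[mS hS] _] := aS; have [mT hT] := mpT.
pose H := fun z : X * Y => ((g z.1 * f (T z).1)%:E).
have iH : m.-integrable setT H := L2_mul_int (L2_fst eta Lg) (LK mpT Lf).
have TJ : forall u, T (Jt u) = Jt (Tinv u).
  by move=> u; rewrite -[in LHS](hiT u) hJT hiT.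
pose K := fun w : X * Y => ((g (J w.1) * f (J (Tinv w).1))%:E).
have HK : forall w, H (Jt w) = K w by move=> w; rewrite /H /K TJ !hJ1.
have iK : m.-integrable setT K.
  exact: (eq_integrable measurableT (H \o Jt) K (fun w _ => HK w) (tr_integrable mJ hJ iH)).
pose M := fun u : X * Y => ((g (T u).1 * f u.1)%:E).
have KM : forall w, K (T w) = M (St w).
  by move=> w; rewrite /K /M hTi -hST !hS1.
have iM : m.-integrable setT M := L2_mul_int (LK mpT Lg) (L2_fst eta Lf).
transitivity (\int[m]_z K z)%E.
  rewrite -(tr_integral mJ hJ iH); apply: eq_integral => w _; exact: HK.
rewrite -(tr_integral mT hT iK).
transitivity (\int[m]_z M (St z))%E.
  by apply: eq_integral => w _; exact: KM.
rewrite (tr_integral mS hS iM).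
by apply: eq_integral => w _; rewrite /M mulrC.
Qed.

End Sym.
Theorem theorem2 (R : realType) (d1 d2 : measure_display)
  (X : measurableType d1) (Y : measurableType d2)
  (mu : probability X R) (eta : probability Y R)
  (T Tinv : X * Y -> X * Y) (Jt St : X * Y -> X * Y) (J : X -> X) :
  (* T is an invertible measurable map preserving mu (x) eta *)
  measurable_fun setT Tinv -> cancel T Tinv -> cancel Tinv T ->
  measure_preserving (mu \x eta)%E T ->
  (* symmetry of the system *)
  measure_automorphism (mu \x eta)%E Jt ->
  measure_automorphism (mu \x eta)%E St ->
  (forall z, (Jt z).1 = J z.1) ->
  (forall z, (St z).1 = J z.1) ->
  (forall z, Jt (T z) = Tinv (Jt z)) ->
  (forall z, St (T z) = T (St z)) ->
  L2_selfadjoint mu (transition_op eta T) /\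
  L2_opnorm mu (transition_op eta T) = 1%:E.
Proof.
move=> _ hTi hiT mpT aJ aS hJ1 hS1 hJT hST.
split.
  split; first by move=> f Lf; exact: P_L2.
  move=> f g Lf Lg; rewrite /L2dot.
  rewrite (_ : (fun x => transition_op eta T f x * g x) =
               (fun x => g x * transition_op eta T f x)); last first.
    by apply/funext => x; rewrite mulrC.
  rewrite (P_fubini mpT Lg Lf) (P_fubini mpT Lf Lg).
  rewrite /Rintegral; congr fine.
  exact: (sym_int hTi hiT mpT aJ aS hJ1 hS1 hJT hST Lf Lg).
have L1 : L2fun mu (cst (1 : R)).
  apply: L2fun_sqr => //.
  exact: (finite_measure_integrable_cst mu (1 ^+ 2) measurableT).
have P1 : transition_op eta T (cst 1) = cst 1.
  apply/funext => s; rewrite /transition_op.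
  transitivity (Rintegral eta setT (fun _ => (1 : R))) => //.
  rewrite Rintegral_cst // mul1r.
  transitivity (fine (1%E : \bar R)) => //; congr fine; exact: probability_setT.
have N1 : Lnorm mu 2%:E (EFin \o cst (1 : R)) = 1%E.
  rewrite Lnorm2E.
  under eq_integral do rewrite expr1n.
  rewrite integral_cst // mul1e.
  transitivity ((1%E : \bar R) `^ 2^-1)%E; last exact: poweR1r.
  congr (_ `^ _)%E; exact: probability_setT.
rewrite /L2_opnorm; apply/eqP; rewrite eq_le; apply/andP; split.
  apply: ge_ereal_inf; exists 1%:E => //; exists 1 => //; split => //.
  move=> f Lf; rewrite mul1e !Lnorm2E.
  apply: gt0_ler_poweR => //.
  - by rewrite in_itv /= leey andbT; apply: integral_ge0 => x _; rewrite lee_fin sqr_ge0.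
  - by rewrite in_itv /= leey andbT; apply: integral_ge0 => x _; rewrite lee_fin sqr_ge0.
  - exact: (P_bound mpT Lf).
apply: le_ereal_inf_tmp => _ [c [c0 Hc] <-].
have := Hc _ L1; rewrite P1 N1 mule1 lee_fin //.
Qed.
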